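(* Let $Par^{bal}(k)$ denote the subspace of the partition algebra $Par(n,k)$ spanned by the balanced set partitions. Then: (1) $Par^{bal}(k)$ is a subalgebra of $Par(n,k)$; (2) for any $n,m$, the identification of these subspaces of $Par(n,k)$ and $Par(m,k)$ via the common basis of balanced set partitions is an isomorphism of algebras; (3) the action of $Par(n,k)$ on $V^{\otimes k}$ restricts to a $T\rtimes S_n$-equivariant action of $Par^{bal}(k)$, and the resulting algebra homomorphism $Par^{bal}(k)\to\mathrm{End}_{T\rtimes S_n}(V^{\otimes k})$ is surjective for all $n$ and $k$, and is an isomorphism whenever $n\ge k$.
   Context: $V=\mathbb{C}^n$ is the defining representation of $GL_n(\mathbb{C})$ with standard basis $x_1,\dots,x_n$, restricted to $T\rtimes S_n$, where $T$ is the diagonal torus and $S_n$ the permutation matrices. The partition algebra $Par(n,k)$ has basis the set partitions $d$ of $\{1,\dots,k\}\cup\{1',\dots,k'\}$; the product $d_1d_2$ is obtained by stacking the diagrams (identifying the primed vertices of one with the unprimed vertices of the other), taking the induced set partition of the outer vertices, and multiplying by $n^{c}$ where $c$ is the number of connected components lying entirely in the middle row. $Par(n,k)$ acts $S_n$-equivariantly on $V^{\otimes k}$ by letting $d$ send $x_{j_1}\otimes\dots\otimes x_{j_k}$ to $\sum x_{i_1}\otimes\dots\otimes x_{i_k}$, summed over all $(i_1,\dots,i_k)$ such that for any two vertices in the same block of $d$ the corresponding indices (with $i_r$ attached to vertex $r$ and $j_r$ to vertex $r'$) are equal. A set partition of $\{1,\dots,k\}\cup\{1',\dots,k'\}$ is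 balanced if each block $B$ satisfies $|B\cap\{1,\dots,k\}|=|B\cap\{1',\dots,k'\}|$. *)

(* Defs.v *)
From HB Require Import structures.
From mathcomp Require Import all_boot all_order all_algebra all_fingroup.
Set Implicit Arguments. Unset Strict Implicit. Unset Printing Implicit Defensive.
Import GRing.Theory Num.Theory.
Local Open Scope ring_scope.

(* Vertices: [inl i] is the unprimed vertex i, [inr i] the primed i'. *)
Notation vert k := ('I_k + 'I_k)%type.

Definition setpart (k : nat) :=
  {P : {set {set vert k}} | partition P [set: vert k]}.

Definition blk k (d : setpart k) (u v : vert k) : bool :=
  pblock (val d) u == pblock (val d) v.

Definition balanced_part k (d : setpart k) : bool :=
  [forall B in val d,
     #|[set i : 'I_k | inl i \in B]| == #|[set i : 'I_k | inr i \in B]|].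

(* Stacking: d1 on top of d2; the primed vertices of d1 are identified *)
(* with the unprimed vertices of d2 (the middle row).                  *)
(* Rows: inl (inl i) = top, inl (inr i) = middle, inr i = bottom.      *)
Notation row3 k := ('I_k + 'I_k + 'I_k)%type.

Definition e_top k (v : vert k) : row3 k :=
  match v with inl i => inl (inl i) | inr i => inl (inr i) end.
Definition e_bot k (v : vert k) : row3 k :=
  match v with inl i => inl (inr i) | inr i => inr i end.
Definition e_out k (v : vert k) : row3 k :=
  match v with inl i => inl (inl i) | inr i => inr i end.
Definition is_mid k (x : row3 k) : bool :=
  match x with inl (inr _) => true | _ => false end.

Definition stack_rel k (d1 d2 : setpart k) : rel (row3 k) := fun x y =>
  [exists u, exists v, [&& e_top u == x, e_top v == y & blk d1 u v]] ||
  [exists u, exists v, [&& e_bot u == x, e_bot v == y & blk d2 u v]].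

Definition stack_conn k (d1 d2 : setpart k) := connect (stack_rel d1 d2).

Definition comp_set k (d1 d2 : setpart k) : {set {set vert k}} :=
  [set [set v | stack_conn d1 d2 (e_out u) (e_out v)] | u : vert k].

(* [comp_set d1 d2] is always a partition; [insubd d1] merely packages it
   (the default d1 is never used). *)
Definition comp k (d1 d2 : setpart k) : setpart k := insubd d1 (comp_set d1 d2).

Definition nmid k (d1 d2 : setpart k) : nat :=
  #|[set [set y | stack_conn d1 d2 (inl (inr j)) y] | j : 'I_k &
      [forall y, stack_conn d1 d2 (inl (inr j)) y ==> is_mid y]]|.

(* The partition algebra Par(n,k) over K: vectors = finitely supported *)
(* functions on the basis of set partitions, bilinear product.         *)
Definition parvec (K : nzRingType) k := {ffun setpart k -> K}.

Definition parmul (K : nzRingType) k (n : nat) (x y : parvec K k) : parvec K k :=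
  [ffun d => \sum_(d1 : setpart k) \sum_(d2 : setpart k | comp d1 d2 == d)
                x d1 * y d2 * (n%:R) ^+ nmid d1 d2].

Definition id_set k : {set {set vert k}} := [set [set inl i; inr i] | i : 'I_k].
Definition parone (K : nzRingType) k : parvec K k :=
  [ffun d => (val d == id_set k)%:R].

(* x lies in the span Par^bal(k) of the balanced set partitions *)
Definition balanced (K : nzRingType) k (x : parvec K k) : Prop :=
  forall d : setpart k, ~~ balanced_part d -> x d = 0.

(* V^{(x) k}, V = K^n: basis x_{i_1} (x) ... (x) x_{i_k}, indexed by   *)
(* i : 'I_k -> 'I_n.  Endomorphisms are matrices E i j (E x_j =        *)
(* sum_i E i j x_i).                                                   *)
Definition tidx k n := {ffun 'I_k -> 'I_n}.

Definition label k n (i j : tidx k n) (v : vert k) : 'I_n :=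
  match v with inl r => i r | inr r => j r end.

Definition diag_act (K : nzRingType) k n (d : setpart k) (i j : tidx k n) : K :=
  ([forall u, forall v, blk d u v ==> (label i j u == label i j v)])%:R.

Definition par_act (K : nzRingType) k n (x : parvec K k) (i j : tidx k n) : K :=
  \sum_(d : setpart k) x d * diag_act K d i j.

Definition tensor_pow (K : nzRingType) k n (g : 'M[K]_n) (i j : tidx k n) : K :=
  \prod_(r < k) g (i r) (j r).

(* T x| S_n inside GL_n(K): invertible diagonal times permutation matrix *)
Definition in_TSn (K : nzRingType) n (g : 'M[K]_n) : Prop :=
  exists (t : 'rV[K]_n) (s : 'S_n),
    (forall l, t 0 l != 0) /\ g = diag_mx t *m perm_mx s.

Definition equivariant (K : nzRingType) k n (E : tidx k n -> tidx k n -> K) : Prop :=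
  forall g : 'M[K]_n, in_TSn g ->
    forall i j : tidx k n,
      \sum_(l : tidx k n) E i l * tensor_pow g l j =
      \sum_(l : tidx k n) tensor_pow g i l * E l j.

(* Main.v *)
From Pilot Require Import Defs.
From HB Require Import structures.
From mathcomp Require Import all_boot all_order all_algebra all_fingroup.
From mathcomp Require Import zify.
Set Implicit Arguments. Unset Strict Implicit. Unset Printing Implicit Defensive.
Import GRing.Theory Num.Theory.
Local Open Scope ring_scope.

Section Basic.
Variable k : nat.
Implicit Types d e : setpart k.

Definition relset (r : rel (vert k)) : {set {set vert k}} :=
  [set [set v | r u v] | u : vert k].

Lemma relsetE r : relset r = equivalence_partition r setT.
Proof.
apply/setP=> B; apply/imsetP/imsetP=> [[u _ ->]|[u _ ->]]; exists u => //;
  by apply/setP=> v; rewrite !inE.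
Qed.

Lemma relset_part r : equivalence_rel r -> partition (relset r) setT.
Proof. by move=> H; rewrite relsetE; apply: equivalence_partitionP; apply: in3W. Qed.

Lemma pblock_relset r : equivalence_rel r -> forall u v,
  (v \in pblock (relset r) u) = r u v.
Proof.
move=> H u v; rewrite relsetE; apply: pblock_equivalence_partition => //.
Qed.

Definition mkpart r (H : equivalence_rel r) : setpart k :=
  exist _ (relset r) (relset_part H).

Lemma part_d d : partition (val d) setT. Proof. exact: valP d. Qed.
Lemma triv_d d : trivIset (val d). Proof. exact: partition_trivIset (part_d d). Qed.
Lemma cover_d d u : u \in cover (val d).
Proof. by rewrite (cover_partition (part_d d)) inE. Qed.

Lemma blkE d u v : blk d u v = (v \in pblock (val d) u).
Proof. by rewrite /blk eq_pblock ?triv_d ?cover_d. Qed.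

Lemma blk_mkpart r (H : equivalence_rel r) u v : blk (mkpart H) u v = r u v.
Proof. by rewrite blkE pblock_relset. Qed.

Lemma blk_refl d u : blk d u u. Proof. exact: eqxx. Qed.
Lemma blk_sym d u v : blk d u v = blk d v u. Proof. exact: eq_sym. Qed.
Lemma blk_trans d u v w : blk d u v -> blk d v w -> blk d u w.
Proof. by rewrite /blk => /eqP-> /eqP->. Qed.
Lemma blk_equiv d : equivalence_rel (blk d).
Proof. by move=> x y z; split; [apply: blk_refl | rewrite /blk => /eqP->]. Qed.

Lemma val_relset d : val d = relset (blk d).
Proof.
rewrite relsetE -{1}(equivalence_partition_pblock (part_d d)).
rewrite /equivalence_partition; apply: eq_imset => u.
by apply/setP=> v; rewrite !inE blkE.
Qed.

Lemma blk_inj d e : (forall u v, blk d u v = blk e u v) -> d = e.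
Proof.
move=> H; apply: val_inj; rewrite !val_relset.
by apply/setP=> B; apply/imsetP/imsetP=> [[u _ ->]|[u _ ->]]; exists u => //;
  apply/setP=> v; rewrite !inE H.
Qed.

Lemma mem_blockP d B : B \in val d -> exists u, B = [set v | blk d u v].
Proof. by rewrite val_relset => /imsetP[u _ ->]; exists u. Qed.

End Basic.

Section SumEq.
Variable k : nat.
Lemma eq_ll (a b : 'I_k) : (inl a == inl b :> vert k) = (a == b).
Proof. by apply/eqP/eqP => [[]|->]. Qed.
Lemma eq_rr (a b : 'I_k) : (inr a == inr b :> vert k) = (a == b).
Proof. by apply/eqP/eqP => [[]|->]. Qed.
Lemma eq_lr (a b : 'I_k) : (inl a == inr b :> vert k) = false.
Proof. by apply/eqP. Qed.
Lemma eq_rl (a b : 'I_k) : (inr a == inl b :> vert k) = false.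
Proof. by apply/eqP. Qed.
End SumEq.
Definition sumE := (eq_ll, eq_rr, eq_lr, eq_rl, orbF, orFb).

Section Bal.
Variable k : nat.
Implicit Types d e : setpart k.

Lemma pblock_eq_in d B u : B \in val d -> (pblock (val d) u == B) = (u \in B).
Proof.
move=> HB; apply/eqP/idP => [<-|Hu]; first by rewrite mem_pblock cover_d.
exact: def_pblock (triv_d d) HB Hu.
Qed.

Lemma in_block_blk d B u v : B \in val d -> u \in B -> (v \in B) = blk d u v.
Proof. by move=> HB Hu; rewrite blkE (def_pblock (triv_d d) HB Hu). Qed.

Lemma block_nonempty d B : B \in val d -> exists w, w \in B.
Proof.
move=> HB; have /set0Pn[w Hw] := partition_neq0 (part_d d) HB; by exists w.
Qed.

Lemma bal_big (R : Type) (idx : R) (op : Monoid.com_law idx) d (f : vert k -> R) :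
  balanced_part d -> (forall u v, blk d u v -> f u = f v) ->
  \big[op/idx]_(r : 'I_k) f (inl r) = \big[op/idx]_(r : 'I_k) f (inr r).
Proof.
move=> /forallP Hb Hf.
rewrite (partition_big (fun r => pblock (val d) (inl r)) (mem (val d)));
  last by move=> r _; apply: pblock_mem; apply: cover_d.
rewrite [RHS](partition_big (fun r => pblock (val d) (inr r)) (mem (val d)));
  last by move=> r _; apply: pblock_mem; apply: cover_d.
apply: eq_bigr => B HB.
have [w Hw] := block_nonempty HB.
have HbB := implyP (Hb B) HB.
rewrite (eq_bigr (fun _ => f w)); last first.
  move=> r /= /eqP Hr; symmetry; apply: Hf; rewrite -(in_block_blk _ HB Hw) -Hr.
  by rewrite mem_pblock cover_d.
rewrite [RHS](eq_bigr (fun _ => f w)); last first.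
  move=> r /= /eqP Hr; symmetry; apply: Hf; rewrite -(in_block_blk _ HB Hw) -Hr.
  by rewrite mem_pblock cover_d.
rewrite !big_const; congr iter.
transitivity #|[set i | inl i \in B]|.
  by apply: eq_card => r; rewrite [RHS]inE -(pblock_eq_in _ HB).
rewrite (eqP HbB).
by apply: eq_card => r; rewrite [LHS]inE -(pblock_eq_in _ HB).
Qed.

Lemma bal_closed d (A : {set vert k}) : balanced_part d ->
  (forall u v, blk d u v -> u \in A -> v \in A) ->
  #|[set i | inl i \in A]| = #|[set i | inr i \in A]|.
Proof.
move=> Hb HA.
have E (P : pred 'I_k) : #|[set i | P i]| = (\sum_i (P i : nat))%N.
  rewrite -sum1_card big_mkcond /=; apply: eq_bigr => i _.
  by rewrite inE; case: (P i).
rewrite !E; apply: (@bal_big nat 0%N addn d (fun u => (u \in A : nat))) => // u v Huv.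
case Hu: (u \in A); first by rewrite (HA u v).
case Hv: (v \in A) => //; by rewrite (HA v u) // blk_sym in Hu.
Qed.


End Bal.

Section Bal2.
Variable k : nat.
Implicit Types d e : setpart k.

Lemma bal_coarse d e : balanced_part d -> (forall u v, blk d u v -> blk e u v) ->
  balanced_part e.
Proof.
move=> Hb H; apply/forallP => B; apply/implyP => HB; apply/eqP.
apply: (bal_closed Hb) => u v Huv Hu.
by rewrite (in_block_blk _ HB Hu); apply: H.
Qed.

Lemma bal_has_top d u : balanced_part d -> exists r, blk d u (inl r).
Proof.
move=> /forallP Hb; case: u => [r|r]; first by exists r; apply: blk_refl.
set B := pblock (val d) (inr r).
have HB : B \in val d by apply: pblock_mem; apply: cover_d.
have /eqP Hc := implyP (Hb B) HB.
have : (0 < #|[set i | inr i \in B]|)%N.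
  by apply/card_gt0P; exists r; rewrite inE /B mem_pblock cover_d.
rewrite -Hc => /card_gt0P [i]; rewrite inE => Hi; exists i.
by rewrite blkE.
Qed.
End Bal2.

Notation parcomp := Pilot.Defs.comp.

Section Stack.
Variable k : nat.
Variables d1 d2 : setpart k.
Local Notation conn := (stack_conn d1 d2).
Local Notation srel := (stack_rel d1 d2).

Lemma srel_sym : symmetric srel.
Proof.
move=> x y; rewrite /stack_rel.
congr orb; apply/existsP/existsP => [] [u /existsP [v /and3P[H1 H2 H3]]];
  exists v; apply/existsP; exists u; rewrite H1 H2 blk_sym H3 //.
Qed.

Lemma conn_sym x y : conn x y = conn y x.
Proof. exact: (sym_connect_sym srel_sym). Qed.
Lemma conn_refl x : conn x x. Proof. exact: connect0. Qed.
Lemma conn_trans x y z : conn x y -> conn y z -> conn x z.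
Proof. exact: connect_trans. Qed.
Lemma conn_top u v : blk d1 u v -> conn (e_top u) (e_top v).
Proof.
move=> H; apply: connect1; apply/orP; left.
by apply/existsP; exists u; apply/existsP; exists v; rewrite !eqxx H.
Qed.
Lemma conn_bot u v : blk d2 u v -> conn (e_bot u) (e_bot v).
Proof.
move=> H; apply: connect1; apply/orP; right.
by apply/existsP; exists u; apply/existsP; exists v; rewrite !eqxx H.
Qed.

Definition ro (u v : vert k) := conn (e_out u) (e_out v).
Lemma ro_equiv : equivalence_rel ro.
Proof.
move=> x y z; split; first exact: conn_refl.
move=> Hxy; apply/idP/idP => H.
  by apply: conn_trans H; rewrite conn_sym.
exact: conn_trans Hxy H.
Qed.

Lemma comp_set_part : partition (comp_set d1 d2) setT.
Proof. exact: (relset_part ro_equiv). Qed.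

Lemma comp_mk : parcomp d1 d2 = mkpart ro_equiv.
Proof. by apply: val_inj; rewrite /Defs.comp insubdK //; apply: comp_set_part. Qed.

Lemma blk_comp u v : blk (parcomp d1 d2) u v = conn (e_out u) (e_out v).
Proof. by rewrite comp_mk blk_mkpart. Qed.

Hypothesis b1 : balanced_part d1.
Hypothesis b2 : balanced_part d2.

Lemma mid_top j : exists r, conn (inl (inr j)) (inl (inl r)).
Proof.
have [r Hr] := bal_has_top (inr j) b1; exists r.
exact: (conn_top Hr).
Qed.

Lemma nmid0 : nmid d1 d2 = 0%N.
Proof.
apply/eqP; rewrite cards_eq0; apply/eqP/setP => S; rewrite inE.
apply/imsetP => [[j Hj _]].
move: Hj; rewrite inE => /forallP H.
have [r Hr] := mid_top j.
by have := implyP (H (inl (inl r))) Hr.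
Qed.

Lemma comp_bal : balanced_part (parcomp d1 d2).
Proof.
apply/forallP => B; apply/implyP; rewrite comp_mk /= => /imsetP [u _ ->].
apply/eqP.
set C := fun x => conn (e_out u) x.
pose A1 := [set v | C (e_top v)].
pose A2 := [set v | C (e_bot v)].
have HA1 : forall v w, blk d1 v w -> v \in A1 -> w \in A1.
  by move=> v w H; rewrite !inE => Hv; apply: conn_trans Hv (conn_top H).
have HA2 : forall v w, blk d2 v w -> v \in A2 -> w \in A2.
  by move=> v w H; rewrite !inE => Hv; apply: conn_trans Hv (conn_bot H).
transitivity #|[set i | inl i \in A1]|.
  by apply: eq_card => i; rewrite !inE.
rewrite (bal_closed b1 HA1).
transitivity #|[set i | inl i \in A2]|.
  by apply: eq_card => i; rewrite !inE.
rewrite (bal_closed b2 HA2).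
by apply: eq_card => i; rewrite !inE.
Qed.

End Stack.

Definition dcond k n (d : setpart k) (i j : tidx k n) : bool :=
  [forall u, forall v, blk d u v ==> (label i j u == label i j v)].

Lemma diag_actE (K : nzRingType) k n d (i j : tidx k n) :
  diag_act K d i j = (dcond d i j)%:R.
Proof. by []. Qed.

Lemma dcondP k n (d : setpart k) (i j : tidx k n) :
  reflect (forall u v, blk d u v -> label i j u = label i j v) (dcond d i j).
Proof.
apply: (iffP forallP) => [H u v Huv|H u].
  by apply/eqP; apply: (implyP (forallP (H u) v)).
by apply/forallP => v; apply/implyP => Huv; apply/eqP; apply: H.
Qed.

Section Diag.
Variables (k n : nat) (d1 d2 : setpart k).
Hypothesis b1 : balanced_part d1.
Local Notation conn := (stack_conn d1 d2).
Local Notation srel := (stack_rel d1 d2).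

Definition lab3 (i l j : tidx k n) (x : row3 k) : 'I_n :=
  match x with inl (inl r) => i r | inl (inr r) => l r | inr r => j r end.

Lemma lab_top i l j u : label i l u = lab3 i l j (e_top u). Proof. by case: u. Qed.
Lemma lab_bot i l j u : label l j u = lab3 i l j (e_bot u). Proof. by case: u. Qed.
Lemma lab_out i l j u : label i j u = lab3 i l j (e_out u). Proof. by case: u. Qed.

Lemma edge_lab i l j : dcond d1 i l -> dcond d2 l j ->
  forall x y, srel x y -> lab3 i l j x = lab3 i l j y.
Proof.
move=> /dcondP H1 /dcondP H2 x y.
case/orP => /existsP [u /existsP [v /and3P [/eqP <- /eqP <- H]]].
  by rewrite -!lab_top; apply: H1.
by rewrite -!lab_bot; apply: H2.
Qed.

Lemma conn_lab i l j : dcond d1 i l -> dcond d2 l j ->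
  forall x y, conn x y -> lab3 i l j x = lab3 i l j y.
Proof.
move=> H1 H2 x y /connectP [p Hp ->] {y}.
elim: p x Hp => //= z p IH x /andP [Hxz Hp].
by rewrite (edge_lab H1 H2 Hxz); apply: IH.
Qed.

Lemma good_uniq (i j l l' : tidx k n) : dcond d1 i l -> dcond d2 l j ->
  dcond d1 i l' -> dcond d2 l' j -> l = l'.
Proof.
move=> H1 H2 H1' H2'; apply/ffunP => r.
have [r' Hr'] := mid_top d2 b1 r.
have := conn_lab H1 H2 Hr'; have := conn_lab H1' H2' Hr'; rewrite /=.
by move=> -> ->.
Qed.

Definition rep (x : row3 k) : vert k :=
  match x with
  | inl (inl r) => inl r
  | inl (inr r) => if [pick r' | conn (inl (inr r)) (inl (inl r'))] is Some r'
                   then inl r' else inl r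
  | inr r => inr r end.

Lemma conn_rep x : conn x (e_out (rep x)).
Proof.
case: x => [[r|r]|r] /=; try exact: connect0.
case: pickP => [r' H|H] //.
have [r' Hr'] := mid_top d2 b1 r; by rewrite H in Hr'.
Qed.

Lemma good_comp (i l j : tidx k n) : dcond d1 i l -> dcond d2 l j -> dcond (parcomp d1 d2) i j.
Proof.
move=> H1 H2; apply/dcondP => u v; rewrite blk_comp => H.
by rewrite !(lab_out i l j); apply: conn_lab H.
Qed.

Lemma comp_good (i j : tidx k n) : dcond (parcomp d1 d2) i j ->
  exists l, dcond d1 i l && dcond d2 l j.
Proof.
move=> /dcondP Hc.
pose l0 : tidx k n := [ffun r => label i j (rep (inl (inr r)))].
have E x : lab3 i l0 j x = label i j (rep x).
  by case: x => [[r|r]|r] //=; rewrite ffunE.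
have Hc' x y : conn x y -> lab3 i l0 j x = lab3 i l0 j y.
  move=> Hxy; rewrite !E; apply: Hc; rewrite blk_comp.
  apply: connect_trans (conn_rep y).
  apply: connect_trans Hxy.
  rewrite (sym_connect_sym (@srel_sym _ d1 d2)); exact: conn_rep.
exists l0; apply/andP; split; apply/dcondP => u v H.
  by rewrite !(lab_top i l0 j); apply: Hc'; apply: conn_top.
by rewrite !(lab_bot i l0 j); apply: Hc'; apply: conn_bot.
Qed.

Lemma sum_diag (K : nzRingType) (i j : tidx k n) :
  \sum_(l : tidx k n) diag_act K d1 i l * diag_act K d2 l j
  = diag_act K (parcomp d1 d2) i j.
Proof.
under eq_bigr do rewrite !diag_actE -natrM mulnb.
rewrite -natr_sum diag_actE; congr (_%:R).
case: (boolP (dcond (parcomp d1 d2) i j)) => Hc.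
  have [l0 /andP [H1 H2]] := comp_good Hc.
  rewrite (bigD1 l0) //= H1 H2 big1 ?addn0 // => l Hl.
  case: (boolP (dcond d1 i l)) => // G1; case: (boolP (dcond d2 l j)) => // G2.
  by rewrite (good_uniq G1 G2 H1 H2) eqxx in Hl.
rewrite big1 // => l _.
case: (boolP (dcond d1 i l)) => // G1; case: (boolP (dcond d2 l j)) => // G2.
by rewrite (good_comp G1 G2) in Hc.
Qed.

End Diag.

Section Id.
Variable k : nat.
Definition idx (u : vert k) : 'I_k := match u with inl r => r | inr r => r end.
Definition idrel (u v : vert k) := idx u == idx v.
Lemma idrel_equiv : equivalence_rel idrel.
Proof. by move=> x y z; split; rewrite /idrel // => /eqP->. Qed.
Definition d_id : setpart k := mkpart idrel_equiv.

Lemma val_did : val d_id = id_set k.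
Proof.
rewrite /= /relset /id_set; apply/setP => B; apply/imsetP/imsetP => [[u _ ->]|[r _ ->]].
  exists (idx u) => //; apply/setP => v; rewrite !inE /idrel.
  by case: v => v /=; rewrite !sumE eq_sym.
exists (inl r) => //; apply/setP => v; rewrite !inE /idrel.
by case: v => v /=; rewrite !sumE eq_sym.
Qed.

Lemma did_bal : balanced_part d_id.
Proof.
apply/forallP => B; apply/implyP => /imsetP [u _ ->]; apply/eqP.
by apply: eq_card => r; rewrite !inE.
Qed.

Lemma parone_d (K : nzRingType) d : parone K k d = (d == d_id)%:R.
Proof. by rewrite ffunE -val_did val_eqE. Qed.

Lemma label_ii n (i : tidx k n) u : label i i u = i (idx u).
Proof. by case: u. Qed.

Lemma par_act_one (K : nzRingType) n (i j : tidx k n) :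
  par_act (parone K k) i j = (i == j)%:R.
Proof.
rewrite /par_act (bigD1 d_id) //= parone_d eqxx mul1r big1 ?addr0; last first.
  by move=> d Hd; rewrite parone_d (negbTE Hd) mul0r.
rewrite diag_actE; suff -> : dcond d_id i j = (i == j) by [].
apply/idP/eqP => [/dcondP H|<-].
  apply/ffunP => r; have /= := H (inl r) (inr r); apply; by rewrite blk_mkpart /idrel.
apply/dcondP => u v; rewrite blk_mkpart /idrel !label_ii => /eqP ->; done.
Qed.

End Id.

Section Hom.
Variables (K : comNzRingType) (k n : nat).

Lemma par_act_mul (x y : parvec K k) (i j : tidx k n) :
  balanced x -> balanced y ->
  par_act (parmul n x y) i j = \sum_(l : tidx k n) par_act x i l * par_act y l j.
Proof.
move=> bx by_.
rewrite /par_act.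
transitivity (\sum_(d : setpart k) \sum_(d1 : setpart k) \sum_(d2 : setpart k | parcomp d1 d2 == d)
   x d1 * y d2 * (n%:R ^+ nmid d1 d2) * diag_act K d i j).
  apply: eq_bigr => d _; rewrite ffunE mulr_suml; apply: eq_bigr => d1 _.
  by rewrite mulr_suml.
rewrite exchange_big /=.
transitivity (\sum_(d1 : setpart k) \sum_(d2 : setpart k)
   x d1 * y d2 * (n%:R ^+ nmid d1 d2) * diag_act K (parcomp d1 d2) i j).
  apply: eq_bigr => d1 _.
  rewrite (exchange_big_dep xpredT) //=; apply: eq_bigr => d2 _.
  by rewrite (big_pred1 (parcomp d1 d2)) // => d; rewrite /= eq_sym.
under [RHS]eq_bigr => l _ do rewrite mulr_suml.
rewrite [RHS]exchange_big /=; apply: eq_bigr => d1 _.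
under [RHS]eq_bigr => l _ do rewrite mulr_sumr.
rewrite [RHS]exchange_big /=; apply: eq_bigr => d2 _.
have E : \sum_(l : tidx k n) x d1 * diag_act K d1 i l * (y d2 * diag_act K d2 l j)
   = x d1 * y d2 * \sum_(l : tidx k n) diag_act K d1 i l * diag_act K d2 l j.
  rewrite mulr_sumr; apply: eq_bigr => l _.
  by rewrite -!mulrA; congr (_ * _); rewrite mulrCA.
rewrite E.
case: (boolP (balanced_part d1)) => H1; last by rewrite (bx _ H1) !mul0r.
case: (boolP (balanced_part d2)) => H2; last by rewrite (by_ _ H2) mulr0 !mul0r.
by rewrite nmid0 // expr0 mulr1 sum_diag.
Qed.
End Hom.

Section Equiv.
Variables (K : comNzRingType) (k n : nat).

Definition relab (s : 'S_n) (i : tidx k n) : tidx k n := [ffun r => s (i r)].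

Lemma label_relab s (i j : tidx k n) u :
  label (relab s i) (relab s j) u = s (label i j u).
Proof. by case: u => r /=; rewrite ffunE. Qed.

Lemma relabK s (i : tidx k n) : relab s^-1 (relab s i) = i.
Proof. by apply/ffunP => r; rewrite !ffunE permK. Qed.
Lemma relabKV s (i : tidx k n) : relab s (relab s^-1 i) = i.
Proof. by apply/ffunP => r; rewrite !ffunE permKV. Qed.
Lemma relab_inj s : injective (relab s).
Proof. exact: can_inj (relabK s). Qed.

Variables (g : 'M[K]_n) (t : 'I_n -> K) (s : 'S_n).
Hypothesis gE : forall a b, g a b = t a * (s a == b)%:R.

Lemma tpE (l j : tidx k n) :
  tensor_pow g l j = (\prod_r t (l r)) * (relab s l == j)%:R.
Proof.
rewrite /tensor_pow.
transitivity (\prod_(r < k) (t (l r) * (s (l r) == j r)%:R)).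
  by apply: eq_bigr => r _; apply: gE.
rewrite big_split /=.
congr (_ * _).
case: (boolP (relab s l == j)) => [/eqP <-|H].
  by rewrite big1 // => r _; rewrite ffunE eqxx.
have [r Hr] : exists r, s (l r) != j r.
  apply/existsP; apply: contraR H => /existsPn H; apply/eqP/ffunP => r.
  by rewrite ffunE; apply/eqP; move: (H r); rewrite negbK.
by rewrite (bigD1 r) //= (negbTE Hr) mul0r.
Qed.

Lemma equiv_sides (E : tidx k n -> tidx k n -> K) (i j : tidx k n) :
  (\sum_(l : tidx k n) E i l * tensor_pow g l j =
   E i (relab s^-1 j) * \prod_r t (relab s^-1 j r)) /\
  (\sum_(l : tidx k n) tensor_pow g i l * E l j =
   (\prod_r t (i r)) * E (relab s i) j).
Proof.
split.
  rewrite (bigD1 (relab s^-1 j)) //= big1 ?addr0.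
    by rewrite tpE relabKV eqxx mulr1.
  move=> l Hl; rewrite tpE.
  case: (boolP (relab s l == j)) => [/eqP Hlj|H]; last by rewrite mulr0n !mulr0.
  by rewrite -Hlj relabK eqxx in Hl.
rewrite (bigD1 (relab s i)) //= big1 ?addr0.
  by rewrite tpE eqxx mulr1.
by move=> l Hl; rewrite tpE eq_sym (negbTE Hl) mulr0 mul0r.
Qed.

Lemma diag_equiv (d : setpart k) : balanced_part d ->
  forall i j : tidx k n,
  \sum_(l : tidx k n) diag_act K d i l * tensor_pow g l j =
  \sum_(l : tidx k n) tensor_pow g i l * diag_act K d l j.
Proof.
move=> bd i j; have [-> ->] := equiv_sides (diag_act K d) i j.
set j' := relab s^-1 j.
have Hj : j = relab s j' by rewrite /j' relabKV.
rewrite Hj !diag_actE.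
have -> : dcond d (relab s i) (relab s j') = dcond d i j'.
  apply/dcondP/dcondP => H u v Huv.
    by apply: (@perm_inj _ s); rewrite -!label_relab; apply: H.
  by rewrite !label_relab (H u v Huv).
case: (boolP (dcond d i j')) => [/dcondP H|]; last by rewrite mul0r mulr0.
rewrite mul1r mulr1.
have := @bal_big k K 1 *%R d (fun u => t (label i j' u)) bd.
by move=> -> // u v Huv; rewrite (H u v Huv).
Qed.

End Equiv.

Lemma in_TSn_E (K : nzRingType) n (g : 'M[K]_n) : in_TSn g ->
  exists (t : 'I_n -> K) (s : 'S_n), forall a b, g a b = t a * (s a == b)%:R.
Proof.
move=> [t [s [_ ->]]]; exists (fun a => t 0 a), s => a b.
rewrite mul_diag_mx mxE; congr (_ * _); by rewrite /perm_mx row_permEsub !mxE.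
Qed.

Lemma par_act_equiv (K : comNzRingType) k n (x : parvec K k) :
  balanced x -> equivariant (@par_act K k n x).
Proof.
move=> bx g Hg i j; have [t [s gE]] := in_TSn_E Hg.
rewrite /par_act.
under eq_bigr do rewrite mulr_suml.
rewrite exchange_big /=.
under [RHS]eq_bigr do rewrite mulr_sumr.
rewrite [RHS]exchange_big /=; apply: eq_bigr => d _.
case: (boolP (balanced_part d)) => bd; last first.
  by rewrite big1 ?[RHS]big1 // => l _; rewrite bx // ?mul0r ?mulr0.
transitivity (x d * \sum_(l : tidx k n) diag_act K d i l * tensor_pow g l j).
  by rewrite mulr_sumr; apply: eq_bigr => l _; rewrite mulrA.
rewrite (diag_equiv gE bd i j) mulr_sumr; apply: eq_bigr => l _.
by rewrite mulrCA.
Qed.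

Section Ker.
Variables (k n : nat).
Implicit Types d e : setpart k.

Definition kerrel (i j : tidx k n) (u v : vert k) := label i j u == label i j v.
Lemma kerrel_equiv i j : equivalence_rel (kerrel i j).
Proof. by move=> x y z; split; rewrite /kerrel // => /eqP->. Qed.
Definition kerp i j : setpart k := mkpart (kerrel_equiv i j).
Lemma blk_ker i j u v : blk (kerp i j) u v = (label i j u == label i j v).
Proof. by rewrite blk_mkpart. Qed.

Definition le d e := [forall u, forall v, blk d u v ==> blk e u v].
Lemma lePart d e : reflect (forall u v, blk d u v -> blk e u v) (le d e).
Proof.
apply: (iffP forallP) => [H u v Huv|H u].
  by apply: (implyP (forallP (H u) v)).
by apply/forallP => v; apply/implyP => Huv; apply: H.
Qed.
Lemma le_refl d : le d d. Proof. by apply/lePart. Qed.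

Lemma dcond_le d (i j : tidx k n) : dcond d i j = le d (kerp i j).
Proof.
rewrite /dcond /le; apply: eq_forallb => u; apply: eq_forallb => v.
by rewrite blk_ker.
Qed.

Lemma par_act_le (K : nzRingType) (x : parvec K k) (i j : tidx k n) :
  par_act x i j = \sum_d x d * (le d (kerp i j))%:R.
Proof. by apply: eq_bigr => d _; rewrite diag_actE dcond_le. Qed.

Definition npairs d := #|[set p : vert k * vert k | blk d p.1 p.2]|.

Lemma le_npairs d e : le d e -> (npairs d <= npairs e)%N.
Proof.
move/lePart => H; apply: subset_leq_card; apply/subsetP => p; rewrite !inE.
exact: H.
Qed.

Lemma le_eq d e : le d e -> (npairs e <= npairs d)%N -> d = e.
Proof.
move=> H1 H2.
have /eqP Heq : [set p : vert k * vert k | blk d p.1 p.2] ==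
                [set p : vert k * vert k | blk e p.1 p.2].
  rewrite eqEcard H2 andbT; apply/subsetP => p; rewrite !inE.
  exact: (lePart _ _ H1).
apply: blk_inj => u v.
by move/setP: Heq => /(_ (u, v)); rewrite !inE.
Qed.

Lemma npairs_max d : (npairs d <= #|{: vert k * vert k}|)%N.
Proof. exact: max_card. Qed.

End Ker.

Lemma gE_of (K : nzRingType) n (t : 'rV[K]_n) (s : 'S_n) a b :
  (diag_mx t *m perm_mx s) a b = t 0 a * (s a == b)%:R.
Proof.
rewrite mul_diag_mx mxE; congr (_ * _).
by rewrite /perm_mx row_permEsub !mxE.
Qed.

Section EqProps.
Variables (K : numFieldType) (k n : nat).
Variable E : tidx k n -> tidx k n -> K.
Hypothesis HE : equivariant E.

Lemma E_perm (s : 'S_n) (i j : tidx k n) : E (relab s i) (relab s j) = E i j.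
Proof.
pose t : 'rV[K]_n := const_mx 1.
have Hg : in_TSn (diag_mx t *m perm_mx s).
  by exists t, s; split => // l; rewrite mxE oner_neq0.
have gE a b : (diag_mx t *m perm_mx s) a b = (fun _ => 1) a * (s a == b)%:R.
  by rewrite gE_of mxE.
have := HE Hg i (relab s j).
have [-> ->] := equiv_sides gE E i (relab s j).
rewrite relabK !big1_eq mulr1 mul1r => ->; done.
Qed.

Lemma E_weight (i j : tidx k n) : E i j != 0 ->
  forall a : 'I_n, #|[pred r | i r == a]| = #|[pred r | j r == a]|.
Proof.
move=> Hij a.
pose t : 'rV[K]_n := \row_b (if b == a then 2 else 1).
have Hg : in_TSn (diag_mx t *m perm_mx 1%g).
  exists t, (1%g : 'S_n); split => // l; rewrite mxE.
  by case: (l == a); rewrite ?oner_neq0 ?pnatr_eq0.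
have gE b c : (diag_mx t *m perm_mx 1%g) b c =
   (fun b => if b == a then 2 else 1) b * ((1%g : 'S_n) b == c)%:R.
  by rewrite gE_of mxE.
have := HE Hg i j.
have [-> ->] := equiv_sides gE E i j.
have -> : relab (1%g : 'S_n)^-1 j = j by apply/ffunP => r; rewrite ffunE invg1 perm1.
have -> : relab (1%g : 'S_n) i = i by apply/ffunP => r; rewrite ffunE perm1.
have P l : \prod_r (if l r == a then 2 else 1) = 2 ^+ #|[pred r | l r == a]| :> K.
  by rewrite -big_mkcond /= prodr_const.
rewrite !P mulrC => /(mulIf Hij) /eqP.
rewrite -!natrX eqr_nat eqn_exp2l // => /eqP ->; done.
Qed.

Lemma E_bsupp (i j : tidx k n) : E i j != 0 -> balanced_part (kerp i j).
Proof.
move=> Hij; apply/forallP => B; apply/implyP => /imsetP [u _ ->]; apply/eqP.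
transitivity #|[pred r | i r == label i j u]|.
  by apply: eq_card => r; rewrite !inE /kerrel /= eq_sym.
rewrite (E_weight Hij).
by apply: eq_card => r; rewrite !inE /kerrel /= eq_sym.
Qed.

End EqProps.

Section Inv.
Variables (T : Type) (k n : nat).
Variable F : tidx k n -> tidx k n -> T.
Hypothesis HP : forall (s : 'S_n) i j, F (relab s i) (relab s j) = F i j.

Lemma F_inv (i j i' j' : tidx k n) : kerp i j = kerp i' j' -> F i j = F i' j'.
Proof.
move=> Heq.
have Hk : forall u v, (label i j u == label i j v) = (label i' j' u == label i' j' v).
  by move=> u v; rewrite -!blk_ker Heq.
move: {Heq} Hk.
move: {2}#|[set u | label i j u != label i' j' u]| (leqnn #|[set u | label i j u != label i' j' u]|) => N.
elim: N i' j' => [|N IH] i' j' Hc Hk.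
  move: Hc; rewrite leqn0 cards_eq0 => /eqP H0.
  have Hl u : label i j u = label i' j' u.
    by apply/eqP; move/setP: H0 => /(_ u); rewrite !inE => /negbFE.
  have -> : i = i' by apply/ffunP => r; exact: (Hl (inl r)).
  have -> : j = j' by apply/ffunP => r; exact: (Hl (inr r)).
  done.
case: (leqP #|[set u | label i j u != label i' j' u]| N) => HN.
  exact: IH.
have /card_gt0P [u Hu] : (0 < #|[set u | label i j u != label i' j' u]|)%N.
  by apply: leq_ltn_trans HN.
move: (Hu); rewrite inE => Hab.
set a := label i j u in Hab; set b := label i' j' u in Hab.
pose tau : 'S_n := tperm a b.
rewrite -(HP tau i' j').
apply: IH; last first.
  by move=> x y; rewrite !label_relab (inj_eq perm_inj).
have Hsub : [set v | label i j v != label (relab tau i') (relab tau j') v]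
     \subset [set v | label i j v != label i' j' v] :\ u.
  apply/subsetP => v; rewrite !inE label_relab.
  case: (eqVneq v u) => [->|Hvu] /=.
    by rewrite /tau -/b tpermR /a eqxx.
  apply: contraNN => /eqP Hv.
  rewrite -Hv tpermD //.
    apply/eqP => Hva.
    have : label i' j' u == label i' j' v by rewrite -Hk -/a Hva.
    rewrite -/b -Hv -Hva => /eqP Hba; by rewrite Hba eqxx in Hab.
  apply/eqP => Hvb.
  have : label i j u == label i j v by rewrite Hk -/b Hvb Hv.
  rewrite -/a -Hvb => /eqP Hab2; by rewrite Hab2 eqxx in Hab.
apply: leq_trans (subset_leq_card Hsub) _.
move: Hc; rewrite (cardsD1 u) Hu /=; done.
Qed.

End Inv.

Section Surj.
Variables (K : nzRingType) (k n : nat).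

Lemma par_act_add (x y : parvec K k) (i j : tidx k n) :
  par_act (x + y) i j = par_act x i j + par_act y i j.
Proof.
rewrite /par_act -big_split; apply: eq_bigr => d _.
by rewrite ffunE mulrDl.
Qed.

Lemma par_act0 (i j : tidx k n) : par_act (0 : parvec K k) i j = 0.
Proof. by rewrite /par_act big1 // => d _; rewrite ffunE mul0r. Qed.

Definition invF (F : tidx k n -> tidx k n -> K) :=
  forall i j i' j', kerp i j = kerp i' j' -> F i j = F i' j'.
Definition bsuppF (F : tidx k n -> tidx k n -> K) :=
  forall i j, F i j != 0 -> balanced_part (kerp i j).

Lemma par_act_inv (x : parvec K k) : invF (@par_act K k n x).
Proof. by move=> i j i' j' H; rewrite !par_act_le H. Qed.

Lemma par_act_bsupp (x : parvec K k) : balanced x -> bsuppF (@par_act K k n x).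
Proof.
move=> bx i j; rewrite par_act_le => Hs.
have [d _ Hd] : exists2 d, true & x d * (le d (kerp i j))%:R != 0.
  apply/exists_inP; apply: contraR Hs => /exists_inPn H.
  by rewrite big1 // => d _; apply/eqP; rewrite -[_ == 0]negbK H.
case: (boolP (le d (kerp i j))) Hd => Hle; last by rewrite mulr0n mulr0 eqxx.
move=> Hxd; have Hbd : balanced_part d.
  by apply: contraR Hxd => Hb; rewrite bx // mul0r.
exact: bal_coarse Hbd (lePart _ _ Hle).
Qed.

Let M := #|{: vert k * vert k}|.

Lemma surj_aux N : forall F : tidx k n -> tidx k n -> K, invF F -> bsuppF F ->
  (forall i j, F i j != 0 -> (M.+1 - N <= npairs (kerp i j))%N) ->
  exists2 x : parvec K k, balanced x & forall i j, par_act x i j = F i j.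
Proof.
elim: N => [|N IH] F Hinv Hb Hs.
  exists 0; first by move=> d _; rewrite ffunE.
  move=> i j; rewrite par_act0; apply/esym/eqP; apply: contraT => H.
  by have := leq_trans (Hs i j H) (npairs_max _); rewrite subn0 ltnn.
set m := (M.+1 - N.+1)%N.
pose c d := if [pick p : tidx k n * tidx k n | kerp p.1 p.2 == d] is Some p
            then F p.1 p.2 else 0.
pose x0 : parvec K k := [ffun d => if (npairs d == m) && balanced_part d then c d else 0].
have Hx0b : balanced x0.
  by move=> d Hd; rewrite ffunE (negbTE Hd) andbF.
have Ha : forall i j : tidx k n, npairs (kerp i j) = m -> par_act x0 i j = F i j.
  move=> i j He; rewrite par_act_le (bigD1 (kerp i j)) //= le_refl mulr1.
  rewrite big1 ?addr0.
    rewrite ffunE He eqxx /=.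
    case: (boolP (balanced_part (kerp i j))) => Hbal.
      rewrite /c; case: pickP => [p /eqP Hp|H]; first exact: Hinv.
      by have := H (i, j); rewrite /= eqxx.
    by apply/esym/eqP; apply: contraR Hbal; apply: Hb.
  move=> d Hd; case: (boolP (le d (kerp i j))) => Hle; last by rewrite mulr0n mulr0.
  rewrite ffunE; case: (boolP (npairs d == m)) => Hm /=; last by rewrite mul0r.
  by rewrite (le_eq Hle) ?eqxx // in Hd; rewrite He (eqP Hm).
have Hbb : forall i j : tidx k n, (npairs (kerp i j) < m)%N -> par_act x0 i j = 0.
  move=> i j He; rewrite par_act_le big1 // => d _.
  case: (boolP (le d (kerp i j))) => Hle; last by rewrite mulr0n mulr0.
  rewrite ffunE; case: (boolP (npairs d == m)) => Hm /=; last by rewrite mul0r.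
  by have := leq_ltn_trans (le_npairs Hle) He; rewrite (eqP Hm) ltnn.
pose F' i j := F i j - par_act x0 i j.
have [x' bx' Hx'] : exists2 x' : parvec K k, balanced x' &
    forall i j, par_act x' i j = F' i j.
  apply: IH.
  - by move=> i j i' j' H; rewrite /F' (Hinv _ _ _ _ H) (par_act_inv x0 H).
  - move=> i j; rewrite /F'; case: (eqVneq (F i j) 0) => [->|H _]; last exact: Hb.
    by rewrite sub0r oppr_eq0; apply: par_act_bsupp.
  - move=> i j H; rewrite leqNgt; apply/negP => Hlt.
    move: H; rewrite /F'.
    have : (npairs (kerp i j) <= m)%N by rewrite /m; lia.
    rewrite leq_eqVlt => /orP [/eqP He|He].
      by rewrite Ha // subrr eqxx.
    rewrite Hbb // subr0.
    case: (eqVneq (F i j) 0) => // H _.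
    by move: (Hs i j H) He; rewrite -/m; lia.
exists (x' + x0).
  by move=> d Hd; rewrite ffunE bx' // Hx0b // addr0.
by move=> i j; rewrite par_act_add Hx' /F' subrK.
Qed.

Lemma surj_main (F : tidx k n -> tidx k n -> K) : invF F -> bsuppF F ->
  exists2 x : parvec K k, balanced x & forall i j, par_act x i j = F i j.
Proof.
move=> Hi Hb; apply: (@surj_aux M.+1) => // i j _.
by rewrite subnn.
Qed.

End Surj.

Section Inj.
Variables (k n : nat).
Hypothesis Hkn : (k <= n)%N.

Lemma exists_lab (d : setpart k) : balanced_part d ->
  exists i j : tidx k n, kerp i j = d.
Proof.
move=> bd.
pose rho u := odflt (idx u) [pick r | blk d u (inl r)].
pose lam u := widen_ord Hkn (rho u).
have Hr1 u v : blk d u v -> rho u = rho v.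
  move=> Huv; rewrite /rho (@eq_pick _ _ (fun r => blk d v (inl r))); last first.
    move=> r; apply/idP/idP => H.
      by apply: blk_trans H; rewrite blk_sym.
    exact: blk_trans Huv H.
  case: pickP => // H.
  by have [r Hr] := bal_has_top v bd; rewrite H in Hr.
have Hr2 u : blk d u (inl (rho u)).
  rewrite /rho; case: pickP => [r H|H] //=.
  by have [r Hr] := bal_has_top u bd; rewrite H in Hr.
have Hl u v : blk d u v = (lam u == lam v).
  apply/idP/idP => [H|/eqP H].
    by rewrite /lam (Hr1 _ _ H).
  have Hrr : rho u = rho v by apply: val_inj; have := congr1 val H.
  apply: blk_trans (Hr2 u) _; rewrite Hrr blk_sym; exact: Hr2.
exists [ffun r => lam (inl r)], [ffun r => lam (inr r)].
apply: blk_inj => u v; rewrite blk_ker Hl.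
by case: u => u; case: v => v; rewrite /= !ffunE.
Qed.

Lemma inj_main (K : nzRingType) (x : parvec K k) : balanced x ->
  (forall i j : tidx k n, par_act x i j = 0) -> x = 0.
Proof.
move=> bx H0; apply/ffunP => d0; rewrite ffunE; apply/eqP; apply: contraT => Hd0.
case: (@arg_minnP _ d0 (fun d => x d != 0) (@npairs k) Hd0) => d Hd Hmin.
have bd : balanced_part d by apply: contraR Hd => Hb; rewrite bx.
have [i [j Hij]] := exists_lab bd.
have := H0 i j; rewrite par_act_le Hij (bigD1 d) //= le_refl mulr1 big1 ?addr0.
  by move=> Hxd; rewrite Hxd eqxx in Hd.
move=> d' Hd'; case: (boolP (le d' d)) => Hle; last by rewrite mulr0n mulr0.
case: (eqVneq (x d') 0) => [->|Hx]; first by rewrite mul0r.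
by have := le_eq Hle (Hmin d' Hx); move=> E; rewrite E eqxx in Hd'.
Qed.

End Inj.

Lemma parmul_bal (K : nzRingType) k n (x y : parvec K k) :
  balanced x -> balanced y -> balanced (parmul n x y).
Proof.
move=> bx by_ d Hd; rewrite ffunE big1 // => d1 _; rewrite big1 // => d2 /eqP Hc.
case: (boolP (balanced_part d1)) => H1; last by rewrite bx // !mul0r.
case: (boolP (balanced_part d2)) => H2; last by rewrite by_ // mulr0 mul0r.
by rewrite -Hc comp_bal in Hd.
Qed.

Lemma parmul_nm (K : nzRingType) k n m (x y : parvec K k) :
  balanced x -> balanced y -> parmul n x y = parmul m x y.
Proof.
move=> bx by_; apply/ffunP => d; rewrite !ffunE; apply: eq_bigr => d1 _.
apply: eq_bigr => d2 _.
case: (boolP (balanced_part d1)) => H1; last by rewrite bx // !mul0r.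
case: (boolP (balanced_part d2)) => H2; last by rewrite by_ // mulr0 !mul0r.
by rewrite nmid0.
Qed.

Unset Implicit Arguments.
Theorem proposition4p1 (K : numClosedFieldType) (k : nat) :
  (* (1) Par^bal(k) is a subalgebra of Par(n,k) *)
  (balanced (parone K k) /\
   forall (n : nat) (x y : parvec K k),
     balanced x -> balanced y -> balanced (parmul n x y))
  /\
  (* (2) the products on Par^bal(k) agree for all n, m *)
  (forall (n m : nat) (x y : parvec K k),
     balanced x -> balanced y -> parmul n x y = parmul m x y)
  /\
  (* (3) *)
  (forall n : nat,
     (* equivariance of the restricted action *)
     (forall x : parvec K k, balanced x -> equivariant (@par_act K k n x))
     /\ (* it is an algebra homomorphism on Par^bal(k) *)
     (forall x y : parvec K k, balanced x -> balanced y ->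
        forall i j : tidx k n,
          par_act (parmul n x y) i j = \sum_(l : tidx k n) par_act x i l * par_act y l j)
     /\ (forall i j : tidx k n, par_act (parone K k) i j = (i == j)%:R)
     /\ (* surjective onto End_{T x| S_n}(V^{(x) k}) *)
     (forall E : tidx k n -> tidx k n -> K, equivariant E ->
        exists2 x : parvec K k, balanced x & forall i j, par_act x i j = E i j)
     /\ (* injective (hence an isomorphism) when n >= k *)
     ((k <= n)%N -> forall x : parvec K k, balanced x ->
        (forall i j : tidx k n, par_act x i j = 0) -> x = 0)).
Proof.
split; [split|split].
- move=> d Hd; rewrite parone_d; case: (eqVneq d (d_id k)) => [Hdd|_].
    by rewrite Hdd did_bal in Hd.
  by rewrite mulr0n.
- by move=> n x y; apply: parmul_bal.
- by move=> n m x y; apply: parmul_nm.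
move=> n; split; [|split; [|split; [|split]]].
- by move=> x bx; apply: par_act_equiv.
- by move=> x y bx by_ i j; apply: par_act_mul.
- by move=> i j; apply: par_act_one.
- move=> E HE; apply: surj_main.
    by move=> i j i' j' H; apply: F_inv H => s i0 j0; apply: E_perm.
  by move=> i j Hij; apply: E_bsupp Hij.
- by move=> Hkn x bx H; apply: (inj_main Hkn bx H).
Qed.
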